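(* For every graph $G$, every linear order $\prec$ on $V(G)$ and every $r\in\mathbb N$, \[\mathrm{wcol}_r(\mathrm{cp}(G),\mathrm{cp}(\prec))\le 2\cdot\mathrm{wcol}_r(G,\prec).\]
   Context: The copy product $\mathrm{cp}(G)$ is obtained by taking the disjoint union of $G$ with a copy $G'$ (the copy of $v$ denoted $\mathrm{cp}(v)$), making every $v$ adjacent to $\mathrm{cp}(v)$, and making $v$ and $\mathrm{cp}(v)$ true twins (same closed neighborhoods); equivalently the lexicographic product of $G$ with $K_2$. $\mathrm{cp}(\prec)$ is the order on $V(\mathrm{cp}(G))$ obtained from $\prec$ by inserting each $\mathrm{cp}(v)$ immediately before $v$. $\mathrm{wcol}_r(H,\prec)$ is the maximum over $v$ of the number of vertices $u$ such that some path of length at most $r$ from $v$ to $u$ has $u$ as its $\prec$-smallest vertex. *)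

(* Defs.v *)
From mathcomp Require Import all_boot.
Set Implicit Arguments. Unset Strict Implicit. Unset Printing Implicit Defensive.

Definition simple_graph (T : finType) (e : rel T) : Prop :=
  symmetric e /\ irreflexive e.

Definition strict_linear_order (T : finType) (lt : rel T) : Prop :=
  [/\ irreflexive lt, transitive lt & forall x y, x != y -> lt x y || lt y x].

Definition wreach (T : finType) (e : rel T) (lt : rel T) (r : nat) (v : T)
  : {set T} :=
  [set u | [exists k : 'I_r.+1, exists p : k.-tuple T,
      [&& path e v p, uniq (v :: p), last v p == u &
          all (fun w => (w == u) || lt u w) (v :: p)]]].

Definition wcol (T : finType) (e : rel T) (lt : rel T) (r : nat) : nat :=
  \max_(v : T) #|wreach e lt r v|.

(* Copy product: vertex (v, true) is v, (v, false) is cp(v).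
   Lexicographic product G[K_2]. *)
Definition cp_adj (T : finType) (e : rel T) : rel (T * bool) :=
  fun x y => ((x.1 == y.1) && (x.2 != y.2)) || e x.1 y.1.

(* cp(lt): cp(v) is inserted immediately before v. *)
Definition cp_lt (T : finType) (lt : rel T) : rel (T * bool) :=
  fun x y => lt x.1 y.1 || [&& x.1 == y.1, ~~ x.2 & y.2].

(* Main.v *)
Require Import Defs.
From mathcomp Require Import all_boot.

Lemma path_refl_uniq (T : eqType) (e : rel T) x (s : seq T) :
  path (fun a b => (a == b) || e a b) x s -> uniq (x :: s) -> path e x s.
Proof.
elim: s x => [//|y s IH] x /= /andP[/orP[/eqP xy|exy] ps] /andP[nx /andP[ny us]].
  by move: nx; rewrite xy inE eqxx.
by rewrite exy IH //= ny.
Qed.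

Lemma wreach_cp_sub (T : finType) (e lt : rel T) (r : nat) (x : T * bool) :
  wreach (cp_adj e) (cp_lt lt) r x \subset setX (wreach e lt r x.1) [set: bool].
Proof.
apply/subsetP => -[u c]; rewrite !inE andbT => /existsP[k /existsP[p]].
case/and4P=> pp _ lp ap.
set e' := fun a b => (a == b) || e a b.
set q := map fst p.
have pq : path e' x.1 q.
  rewrite /q path_map; apply: sub_path pp => a b.
  rewrite /cp_adj /relpre /e' /= => /orP[/andP[/eqP -> _]|->]; by rewrite ?eqxx ?orbT.
have lq : last x.1 q = u by rewrite /q last_map (eqP lp).
have aq : all (fun w => (w == u) || lt u w) (x.1 :: q).
  have -> : x.1 :: q = map fst (x :: p) by [].
  rewrite all_map; apply: sub_all ap => w /=.
  move=> /orP[/eqP -> /=|]; first by rewrite eqxx.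
  rewrite /cp_lt /= => /orP[->|/and3P[/eqP -> _ _]]; by rewrite ?eqxx ?orbT.
case: (shortenP pq) lq => p' pp' up' sub' lp'.
have sz : size p' < r.+1.
  apply: leq_ltn_trans (_ : size q < r.+1).
    apply: uniq_leq_size; first by case/andP: up'.
    exact: sub'.
  by rewrite /q size_map size_tuple.
apply/existsP; exists (Ordinal sz); apply/existsP; exists (in_tuple p').
apply/and4P; split => //.
- exact: path_refl_uniq.
- by rewrite lp'.
- apply/allP => w; rewrite inE => /orP[/eqP ->|wp]; first by case/andP: aq.
  by apply: (allP aq); rewrite inE (sub' _ wp) orbT.
Qed.

Theorem lemma7p20 (T : finType) (e lt : rel T) (r : nat) :
  simple_graph e -> strict_linear_order lt ->
  wcol (cp_adj e) (cp_lt lt) r <= 2 * wcol e lt r.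
Proof.
move=> _ _; apply/bigmax_leqP => x _.
have H := subset_leq_card (wreach_cp_sub T e lt r x).
rewrite cardsX cardsT card_bool in H.
apply: (leq_trans H); rewrite mulnC leq_mul2l /=.
exact: (leq_bigmax x.1).
Qed.
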